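(* Let $\xi$ be a model and let $\phi$ be the unique minimizer of $P_{0,\xi}$ on $\mathcal{C}$. Then $\phi$ is constant on $[0,1]$ if and only if $\xi(t)=a t^2$ for some $a>0$ (i.e. $\xi=\xi_{SK}$).
   Context: A model is $\xi(t)=\sum_{p\ge2}\beta_p^2t^p$, real $\beta_p$ not all zero, with $\xi(1+\epsilon)<\infty$ for some $\epsilon>0$; $\xi_{SK}$ denotes a model with only the $p=2$ term, $\xi(t)=\beta_2^2t^2$. $\mathcal{C}$ is the set of $\phi\in C([0,1])$ with $\phi\ge0$, non-increasing and concave, and $P_{0,\xi}(\phi)=\int_0^1\big(\xi''(x)\phi(x)+\frac1{\phi(x)}\big)dx$. *)

(* Defs.v *)
From HB Require Import structures.
From mathcomp Require Import all_boot all_order all_algebra.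
From mathcomp Require Import all_classical all_reals all_analysis.
Set Implicit Arguments. Unset Strict Implicit. Unset Printing Implicit Defensive.
Import Order.TTheory GRing.Theory Num.Theory.
Import numFieldNormedType.Exports.
Local Open Scope classical_set_scope.
Local Open Scope ring_scope.

Section Defs.
Variable R : realType.

Definition xi (beta : nat -> R) (t : R) : R :=
  limn (fun n => \sum_(2 <= p < n) (beta p ^+ 2 * t ^+ p)).

Definition is_model (beta : nat -> R) : Prop :=
  (exists p, (2 <= p)%N /\ beta p != 0) /\
  exists eps : R, 0 < eps /\
    (\sum_(2 <= p <oo) ((beta p ^+ 2 * (1 + eps) ^+ p)%:E) < +oo)%E.

Definition is_SK (beta : nat -> R) : Prop :=
  exists a : R, 0 < a /\ forall t : R, xi beta t = a * t ^+ 2.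

Definition in_C (phi : R -> R) : Prop :=
  {within `[0, 1], continuous phi} /\
  (forall x, x \in `[0, 1] -> 0 <= phi x) /\
  (forall x y, x \in `[0, 1] -> y \in `[0, 1] -> x <= y -> phi y <= phi x) /\
  (forall x y s, x \in `[0, 1] -> y \in `[0, 1] -> s \in `[0, 1] ->
     (1 - s) * phi x + s * phi y <= phi ((1 - s) * x + s * y)).

Definition P_integrand (beta : nat -> R) (phi : R -> R) (x : R) : \bar R :=
  if phi x == 0 then +oo%E
  else ((derive1n 2 (xi beta)) x * phi x + (phi x)^-1)%:E.

Definition P0 (beta : nat -> R) (phi : R -> R) : \bar R :=
  (\int[@lebesgue_measure R]_(x in `[0%R, 1%R]) P_integrand beta phi x)%E.

Definition is_minimizer (beta : nat -> R) (phi : R -> R) : Prop :=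
  in_C phi /\ forall psi, in_C psi -> (P0 beta phi <= P0 beta psi)%E.

End Defs.

(* Main.v *)
Require Import Defs.
From HB Require Import structures.
From mathcomp Require Import all_boot all_order all_algebra.
From mathcomp Require Import all_classical all_reals all_analysis.
Import Order.TTheory GRing.Theory Num.Theory.
Local Open Scope classical_set_scope.
Local Open Scope ring_scope.

From mathcomp Require Import ring lra.

Module Aux.
Set Implicit Arguments. Unset Strict Implicit. Unset Printing Implicit Defensive.
Import numFieldNormedType.Exports.

Section PS.
Variable R : realType.

Lemma npow_bound (a b : R) (n : nat) : 0 <= a -> a < b ->
  n.+1%:R * a ^+ n * (b - a) <= b ^+ n.+1.
Proof.
move=> a0 ab; elim: n => [|n IH].
  by rewrite expr0 mulr1 expr1 mul1r; lra.
have b0 : 0 <= b by lra.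
have an : a ^+ n.+1 <= b ^+ n.+1 by rewrite lerXn2r // ?nnegrE //; lra.
rewrite exprS [b ^+ _.+1]exprS -natr1.
have h1 : a * (n.+1%:R * a ^+ n * (b - a)) <= a * b ^+ n.+1 by rewrite ler_wpM2l.
have h2 : a ^+ n.+1 * (b - a) <= b ^+ n.+1 * (b - a) by rewrite ler_wpM2r //; lra.
rewrite exprS in an h2.
set u := a ^+ n in h1 h2 an *; set v := b ^+ n.+1 in h1 h2 *.
have -> : (n.+1%:R + 1) * (a * u) * (b - a) = a * (n.+1%:R * u * (b - a)) + a * u * (b - a) by ring.
have -> : b * v = a * v + v * (b - a) by ring.
by apply: lerD.
Qed.


Lemma cvg_series_shift1 (u : R ^nat) : cvgn (series u) -> cvgn (series (fun i => u i.+1)).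
Proof.
move=> Cu.
have -> : series (fun i => u i.+1) = (fun n => series u n.+1 - u 0%N).
  apply/funext => n; rewrite /series /= big_nat_recl //=.
  by rewrite addrAC subrr add0r.
have C1 : cvgn (fun n => series u n.+1).
  by have /cvg_ex[l Hl] := Cu; apply/cvg_ex; exists l; rewrite /= cvg_shiftS.
exact: (is_cvgB C1 (is_cvg_cst _)).
Qed.


Lemma cvg_diffs f (x z : R) : cvgn (pseries f x) -> `|z| < `|x| ->
  cvgn (pseries (pseries_diffs f) z).
Proof.
move=> Cx zx; set w := (`|z| + `|x|) / 2.
have z0 : 0 <= `|z| by [].
have zw : `|z| < w by rewrite /w; lra.
have wx : `|w| < `|x| by rewrite ger0_norm /w; lra.
have w0 : 0 < w by lra.
have Cw := is_cvg_pseries_inside_norm Cx wx.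
set g := fun i => `|f i| * w ^+ i.
have Cg1 : cvgn (series (fun i => g i.+1)) by apply: cvg_series_shift1.
apply: normed_cvg.
apply: (@series_le_cvg _ _ ((w - `|z|)^-1 *: (fun i => g i.+1))).
- by move=> n /=.
- move=> n /=; rewrite /g; apply: mulr_ge0; first by rewrite invr_ge0; lra.
  by apply: mulr_ge0 => //; exact: exprn_ge0 (ltW w0).
- move=> n; rewrite /= /g /pseries_diffs !normrM normrX normr_nat.
  have hb := npow_bound n z0 zw.
  have wz0 : 0 < w - `|z| by lra.
  rewrite ler_pdivlMl //.
  have -> : (w - `|z|) * (n.+1%:R * `|f n.+1| * `|z| ^+ n) =
     `|f n.+1| * (n.+1%:R * `|z| ^+ n * (w - `|z|)) by ring.
  by rewrite ler_wpM2l.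
- exact: is_cvg_seriesZ.
Qed.


Definition allcvg (f : R ^nat) (r : R) := forall k z, `|z| < r ->
  cvgn (pseries (iter k (@pseries_diffs R) f) z).

Lemma allcvg_init f (rho : R) : cvgn (pseries f rho) -> allcvg f `|rho|.
Proof.
move=> C k; elim: k => [|k IH] z zr /=.
  exact: is_cvg_pseries_inside C zr.
set z' := (`|z| + `|rho|) / 2.
have z0 := normr_ge0 z.
have z'0 : 0 <= z' by rewrite /z'; lra.
have h1 : `|z'| < `|rho| by rewrite ger0_norm // /z'; lra.
have h2 : `|z| < `|z'| by rewrite (ger0_norm z'0) /z'; lra.
exact: cvg_diffs (IH _ h1) h2.
Qed.

Lemma allcvg_diffs f r : allcvg f r -> allcvg (pseries_diffs f) r.
Proof. by move=> H k z zr; rewrite -iterSr; exact: H. Qed.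

Definition PS (f : R ^nat) (x : R) := limn (pseries f x).

Lemma PS_derive f r (x : R) : allcvg f r -> `|x| < r ->
  is_derive x 1 (PS f) (PS (pseries_diffs f) x).
Proof.
move=> H xr; set K := (`|x| + r) / 2.
have x0 := normr_ge0 x.
have K0 : 0 <= K by rewrite /K; lra.
have Kr : `|K| < r by rewrite ger0_norm // /K; lra.
have xK : `|x| < `|K| by rewrite (ger0_norm K0) /K; lra.
exact: pseries_snd_diffs (H 0%N _ Kr) (H 1%N _ Kr) (H 2%N _ Kr) xK.
Qed.


Lemma PS_derive1 f r (x : R) : allcvg f r -> `|x| < r ->
  derive1 (PS f) x = PS (pseries_diffs f) x.
Proof. by move=> H xr; rewrite derive1E; have [_ ->] := PS_derive H xr. Qed.

Lemma near_ball (r x : R) : `|x| < r -> \forall y \near x, `|y| < r.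
Proof.
move=> xr; have xi : x \in `]-r, r[ by rewrite in_itv /= -ltr_norml.
have := near_in_itvoo xi; apply: filterS => y; rewrite in_itv /= -ltr_norml.
by [].
Qed.

Lemma PS_derive2 f r (x : R) : allcvg f r -> `|x| < r ->
  derive1 (derive1 (PS f)) x = PS (pseries_diffs (pseries_diffs f)) x.
Proof.
move=> H xr; rewrite derive1E.
rewrite (@near_eq_derive _ _ _ _ (PS (pseries_diffs f))); last first.
  by apply: filterS (near_ball xr) => y yr; exact: PS_derive1 H yr.
by rewrite -derive1E; exact: PS_derive1 (allcvg_diffs H) xr.
Qed.

Lemma PS0 f : PS f 0 = f 0%N.
Proof.
apply: cvg_lim => //; rewrite -cvg_shiftS.
have -> : (fun n => pseries f 0 n.+1) = cst (f 0%N).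
  apply/funext => n; rewrite /pseries /series /= big_nat_recl //= expr0 mulr1.
  by rewrite big1 ?addr0 // => i _; rewrite expr0n mulr0.
exact: cvg_cst.
Qed.

End PS.

Section FTC.
Variable R : realType.
Local Notation mu := (@lebesgue_measure R).

Lemma deriv_cont (F : R -> R) (x d : R) : is_derive x 1 F d -> {for x, continuous F}.
Proof.
move=> [dF _]; apply: differentiable_continuous; exact/derivable1_diffP.
Qed.

Lemma ftc01 (F f : R -> R) :
  (forall x : R, 0 <= x <= 1 -> is_derive x 1 F (f x)) ->
  (forall x : R, 0 <= x <= 1 -> {for x, continuous f}) ->
  (\int[mu]_(x in `[0%R, 1%R]) (f x)%:E = (F 1 - F 0)%:E)%E.
Proof.
move=> dF cf; rewrite EFinB; apply: continuous_FTC2 => //.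
- apply: continuous_in_subspaceT => x; rewrite inE /= in_itv /= => hx.
  exact: cf.
- split.
  + move=> x; rewrite in_itv /= => /andP[h0 h1].
    by have [] := dF x ltac:(apply/andP; split; apply: ltW).
  + apply: cvg_at_right_filter; apply: (deriv_cont (d := f 0)); apply: dF.
    by rewrite lexx ler01.
  + apply: cvg_at_left_filter; apply: (deriv_cont (d := f 1)); apply: dF.
    by rewrite lexx ler01.
- move=> x; rewrite in_itv /= => /andP[h0 h1].
  have [_ <-] := dF x ltac:(apply/andP; split; apply: ltW => //).
  by rewrite derive1E.
Qed.


Definition cont01 (f : R -> R) := forall x : R, 0 <= x <= 1 -> {for x, continuous f}.

Lemma cont01_int f : cont01 f -> mu.-integrable `[0%R, 1%R] (EFin \o f).
Proof.
move=> cf; apply: continuous_compact_integrable; first exact: segment_compact.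
apply: continuous_in_subspaceT => x; rewrite inE /= in_itv /= => hx; exact: cf.
Qed.

Lemma I_R f : cont01 f ->
  (\int[mu]_(x in `[0%R, 1%R]) (f x)%:E = (\int[mu]_(x in `[0%R, 1%R]) f x)%:E)%E.
Proof. by move=> cf; rewrite /Rintegral fineK // integrable_fin_num // cont01_int. Qed.

Lemma mu01 : mu `[0%R, 1%R] = 1%E.
Proof. by rewrite lebesgue_measure_itv /= lte_fin ltr01 oppr0 adde0. Qed.

Lemma J_cst (k : R) : \int[mu]_(x in `[0%R, 1%R]) k = k.
Proof.
rewrite Rintegral_cst // -[X in _ = X]mulr1; congr (_ * _).
rewrite -[RHS]/(fine 1%E); congr fine; exact: mu01.
Qed.

Lemma J_D f g : cont01 f -> cont01 g ->
  \int[mu]_(x in `[0%R, 1%R]) (f x + g x) =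
  \int[mu]_(x in `[0%R, 1%R]) f x + \int[mu]_(x in `[0%R, 1%R]) g x.
Proof. by move=> cf cg; rewrite RintegralD //; exact: cont01_int. Qed.

Lemma J_Z f k : cont01 f ->
  \int[mu]_(x in `[0%R, 1%R]) (k * f x) = k * \int[mu]_(x in `[0%R, 1%R]) f x.
Proof. by move=> cf; rewrite RintegralZl //; exact: cont01_int. Qed.

Lemma J_le f g : cont01 f -> cont01 g -> (forall x : R, 0 <= x <= 1 -> f x <= g x) ->
  \int[mu]_(x in `[0%R, 1%R]) f x <= \int[mu]_(x in `[0%R, 1%R]) g x.
Proof.
move=> cf cg fg; apply: le_Rintegral => //; exact: cont01_int.
Qed.

End FTC.

Section Alg.
Variable R : realType.

Lemma inv_bound (c u e : R) : 0 < c -> `|u| <= e -> e <= c / 2 ->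
  (c + u)^-1 <= c^-1 - u / c ^+ 2 + 2 * e ^+ 2 / c ^+ 3.
Proof.
move=> c0; rewrite ler_norml => /andP[h1 h2] ec.
have e0 : 0 <= e by lra.
have p0 : 0 < c + u by lra.
rewrite -subr_ge0.
have -> : c^-1 - u / c ^+ 2 + 2 * e ^+ 2 / c ^+ 3 - (c + u)^-1 =
   (c * (2 * e ^+ 2 - u ^+ 2) + 2 * e ^+ 2 * u) / (c ^+ 3 * (c + u)).
  by field; apply/andP; split; rewrite ?expf_neq0 // gt_eqF.
apply: divr_ge0; last by rewrite mulr_ge0 // ?exprn_ge0 // ltW.
have hu2 : u ^+ 2 <= e ^+ 2 by nra.
nra.
Qed.

Lemma small_nonneg (A k e0 : R) : 0 < e0 ->
  (forall e, 0 < e -> e <= e0 -> 0 <= e * A + k * e ^+ 2) -> 0 <= A.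
Proof.
move=> e00 H; rewrite leNgt; apply/negP => A0.
pose e := Num.min e0 (- A / (2 * (`|k| + 1))).
have k1 : 0 < `|k| + 1 by have := normr_ge0 k; lra.
have ep : 0 < e by rewrite /e lt_min e00 /= divr_gt0 //; lra.
have ee0 : e <= e0 by rewrite /e ge_min lexx.
have eA : e <= - A / (2 * (`|k| + 1)) by rewrite /e ge_min lexx orbT.
have := H e ep ee0.
have eA' : e * (2 * (`|k| + 1)) <= - A by rewrite -ler_pdivlMr //; lra.
have kk : k <= `|k| by exact: ler_norm.
have : k * e ^+ 2 <= (`|k| + 1) * e ^+ 2 by rewrite ler_wpM2r ?exprn_ge0 //; lra.
nra.
Qed.


Lemma fin_ineq (a b t : R) : 0 <= a - t -> 0 <= b - a + t / 2 -> a <= 2 * b.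
Proof. move=> h1 h2; lra. Qed.


Lemma amgm_c (a c p : R) : 0 < a -> 0 < c -> 0 < p -> c ^+ 2 = (2 * a)^-1 ->
  2 * a * c + c^-1 <= 2 * a * p + p^-1.
Proof.
move=> a0 c0 p0 cc.
have ic : c^-1 = 2 * a * c.
  have c2 : c ^+ 2 * (2 * a) = 1 by rewrite cc mulVf // gt_eqF // mulr_gt0.
  apply: (@mulfI _ c); first by rewrite gt_eqF.
  rewrite mulfV ?gt_eqF //.
  by rewrite -[LHS]c2; ring.
rewrite ic -subr_ge0.
have -> : 2 * a * p + p^-1 - (2 * a * c + 2 * a * c) =
  (2 * a * (p - c) ^+ 2 + (1 - 2 * a * c ^+ 2)) / p.
  by field; rewrite gt_eqF.
rewrite cc mulfV ?subrr ?addr0; last by rewrite gt_eqF // mulr_gt0.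
apply: divr_ge0; last exact: ltW.
apply: mulr_ge0; last exact: sqr_ge0.
by apply: ltW; rewrite mulr_gt0.
Qed.

End Alg.

Section Ser.
Variable R : realType.
Variable beta : nat -> R.

Definition cf : R ^nat := fun i => if (2 <= i)%N then beta i ^+ 2 else 0.

Lemma cf_ge0 i : 0 <= cf i.
Proof. by rewrite /cf; case: ifP => // _; exact: sqr_ge0. Qed.

Lemma sum_cf (t : R) n :
  \sum_(0 <= i < n) cf i * t ^+ i = \sum_(2 <= p < n) beta p ^+ 2 * t ^+ p.
Proof.
case: (ltnP n 2) => hn.
  rewrite [in RHS]big_geq; last exact: ltnW.
  rewrite big_nat big1 // => i /andP[_ hi].
  by rewrite /cf ifF ?mul0r //; apply/negbTE; rewrite -ltnNge (ltn_trans hi).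
rewrite (@big_cat_nat _ _ _ 2 0 n) //=.
rewrite big_nat big1 ?add0r; last first.
  by move=> i /andP[_ hi]; rewrite /cf ifF ?mul0r //; apply/negbTE; rewrite -ltnNge.
rewrite [in RHS]big_nat [in LHS]big_nat; apply: eq_bigr => i /andP[hi _].
by rewrite /cf hi.
Qed.

Lemma xi_PS : xi beta = PS cf.
Proof.
apply/funext => t; rewrite /xi /PS /pseries /series /=; congr (limn _).
by apply/funext => n /=; rewrite sum_cf.
Qed.

Lemma model_cvg eps : 0 < eps ->
  (\sum_(2 <= p <oo) ((beta p ^+ 2 * (1 + eps) ^+ p)%:E) < +oo)%E ->
  cvgn (pseries cf (1 + eps)).
Proof.
move=> e0 H.
set L := (\sum_(2 <= p <oo) ((beta p ^+ 2 * (1 + eps) ^+ p)%:E))%E in H.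
have r0 : 0 <= 1 + eps by lra.
have tge0 : forall p, 0 <= beta p ^+ 2 * (1 + eps) ^+ p.
  by move=> p; rewrite mulr_ge0 ?sqr_ge0 ?exprn_ge0.
have Sle : forall n, ((\sum_(2 <= p < n) beta p ^+ 2 * (1 + eps) ^+ p)%:E <= L)%E.
  move=> n; rewrite -sumEFin; apply: nneseries_lim_ge => k _ _.
  by rewrite lee_fin.
have L0 : (0 <= L)%E by apply: le_trans (Sle 0%N); rewrite big_geq.
have Lfin : L \is a fin_num by rewrite ge0_fin_numE.
have -> : pseries cf (1 + eps) = fun n => \sum_(2 <= p < n) beta p ^+ 2 * (1 + eps) ^+ p.
  by apply/funext => n; rewrite /pseries /series /= sum_cf.
apply: nondecreasing_is_cvgn.
  by apply: nondecreasing_series => n _ _.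
exists (fine L) => _ [n _ <-].
by rewrite -lee_fin fineK.
Qed.


Lemma term_ge0 i : 0 <= (i%:R - 2) * cf i.
Proof.
rewrite /cf; case: ifP => [h|_]; last by rewrite mulr0.
apply: mulr_ge0; last exact: sqr_ge0.
by rewrite subr_ge0 (ler_nat _ 2).
Qed.

Lemma beta_zero r : 1 < r -> allcvg cf r ->
  PS (pseries_diffs cf) 1 <= 2 * PS cf 1 -> forall p, (3 <= p)%N -> beta p = 0.
Proof.
move=> r1 H hle p hp.
have n1 : `|1 : R| < r by rewrite normr1.
have C1 : cvgn (pseries (pseries_diffs cf) 1) := H 1%N 1 n1.
have C0 : cvgn (pseries cf 1) := H 0%N 1 n1.
have E1 := pseries_diffs_equiv C1.
pose T n := \sum_(0 <= i < n) ((i%:R - 2) * cf i).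
have TE : T = fun n => series (fun i => i%:R * cf i * 1 ^+ i.-1) n - 2 * pseries cf 1 n.
  apply/funext => n; rewrite /T /series /pseries /= mulr_sumr -sumrB.
  by apply: eq_bigr => i _; rewrite !expr1n !mulr1; ring.
have E0 : pseries cf 1 @ \oo --> PS cf 1 by exact: C0.
have CT : T @ \oo --> PS (pseries_diffs cf) 1 - 2 * PS cf 1.
  rewrite TE; apply: cvgB; first exact: E1.
  exact: cvgMr.
have nd : nondecreasing_seq T by apply: nondecreasing_series => n _ _; exact: term_ge0.
have Tle : forall n, T n <= 0.
  move=> n; apply: le_trans (nondecreasing_cvgn_le nd (cvgP _ CT) n) _.
  by rewrite (cvg_lim _ CT) // subr_le0.
have := Tle p.+1; rewrite /T big_nat_recr //=.
have : 0 <= \sum_(0 <= i < p) ((i%:R - 2) * cf i) by apply: sumr_ge0 => i _; exact: term_ge0.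
rewrite /cf (leq_trans _ hp) // => h1 h2.
have hp' : 1 <= p%:R - 2 :> R by rewrite lerBrDr (ler_nat _ 3).
have b0 : beta p ^+ 2 <= 0 by nra.
by apply/eqP; rewrite -sqrf_eq0 eq_le b0 sqr_ge0.
Qed.


Lemma SK_of : (forall p, (3 <= p)%N -> beta p = 0) ->
  (exists p, (2 <= p)%N /\ beta p != 0) -> is_SK beta.
Proof.
move=> H3 [p [hp bp]].
have p2 : p = 2%N.
  apply/eqP; rewrite eqn_leq hp andbT leqNgt; apply/negP => h.
  by move/eqP: bp; apply; exact: H3.
subst p.
exists (beta 2%N ^+ 2); split; first by rewrite lt_neqAle sqr_ge0 andbT eq_sym sqrf_eq0.
move=> t; rewrite /xi; apply: cvg_lim => //.
rewrite -(cvg_shiftn 3).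
have -> : (fun n => \sum_(2 <= p < n + 3) beta p ^+ 2 * t ^+ p) = cst (beta 2%N ^+ 2 * t ^+ 2).
  apply/funext => n /=; rewrite big_ltn ?addn3 // big_nat big1 ?addr0 // => i /andP[hi _].
  by rewrite H3 // expr0n mul0r.
exact: cvg_cst.
Qed.

End Ser.

Section Cont.
Variable R : realType.

Lemma cont01D (f g : R -> R) : cont01 f -> cont01 g -> cont01 (fun x => f x + g x).
Proof. by move=> cf cg x hx; apply: continuousD; [exact: cf|exact: cg]. Qed.

Lemma cont01M (f g : R -> R) : cont01 f -> cont01 g -> cont01 (fun x => f x * g x).
Proof. by move=> cf cg x hx; apply: continuousM; [exact: cf|exact: cg]. Qed.

Lemma cont01C (k : R) : cont01 (fun _ => k).
Proof. by move=> x _; exact: cvg_cst. Qed.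

Lemma cont01_id : cont01 (fun x : R => x).
Proof. by move=> x _; exact: cvg_id. Qed.

Lemma cont01V (f : R -> R) : cont01 f -> (forall x, 0 <= x <= 1 -> f x != 0) ->
  cont01 (fun x => (f x)^-1).
Proof. by move=> cf f0 x hx; apply: continuousV; [exact: f0|exact: cf]. Qed.

Lemma der_lin (k x : R) : is_derive x 1 (fun y => k * y) k.
Proof.
have := is_deriveZ k (is_derive_id x (1:R)).
by rewrite /GRing.scale /= mulr1.
Qed.


Lemma in_C_of (psi : R -> R) (a b : R) : (forall x, psi x = a + b * x) -> b <= 0 ->
  (forall x : R, 0 <= x <= 1 -> 0 <= psi x) -> in_C psi.
Proof.
move=> E b0 p0.
have -> : psi = fun x => a + b * x by apply/funext => x; exact: E.
split; [|split; [|split]].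
- apply: continuous_in_subspaceT => x _.
  apply: continuousD; first exact: cvg_cst.
  by apply: continuousM; [exact: cvg_cst|exact: cvg_id].
- by move=> x; rewrite in_itv /= => hx; rewrite -E; exact: p0.
- move=> x y _ _ xy; rewrite lerD2l; exact: ler_wnM2l.
- move=> x y s _ _ _.
  have -> : (1 - s) * (a + b * x) + s * (a + b * y) = a + b * ((1 - s) * x + s * y) by ring.
  exact: lexx.
Qed.

End Cont.

Section Hard.
Variables (R : realType) (beta : nat -> R) (r c : R).
Hypothesis r1 : 1 < r.
Hypothesis Hc : allcvg (cf beta) r.
Hypothesis c0 : 0 < c.
Hypothesis Hmin : forall psi, in_C psi -> (P0 beta (fun _ => c) <= P0 beta psi)%E.
Local Notation mu := (@lebesgue_measure R).

Local Notation X := (PS (cf beta)).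
Local Notation D1 := (PS (pseries_diffs (cf beta))).
Local Notation G := (PS (pseries_diffs (pseries_diffs (cf beta)))).
Local Notation G3 := (PS (pseries_diffs (pseries_diffs (pseries_diffs (cf beta))))).

Let in01 (x : R) : 0 <= x <= 1 -> `|x| < r.
Proof. move=> /andP[h0 h1]; rewrite ger0_norm //. exact: le_lt_trans h1 r1. Qed.

Let dX (x : R) : 0 <= x <= 1 -> is_derive x 1 X (D1 x).
Proof. by move=> hx; apply: PS_derive Hc (in01 hx). Qed.

Let dD1 (x : R) : 0 <= x <= 1 -> is_derive x 1 D1 (G x).
Proof. by move=> hx; apply: PS_derive (allcvg_diffs Hc) (in01 hx). Qed.

Let dG (x : R) : 0 <= x <= 1 -> is_derive x 1 G (G3 x).
Proof. by move=> hx; apply: PS_derive (allcvg_diffs (allcvg_diffs Hc)) (in01 hx). Qed.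

Let G_cont : cont01 G.
Proof. by move=> x hx; exact: deriv_cont (dG hx). Qed.

Let g_eq (x : R) : 0 <= x <= 1 -> derive1n 2 (xi beta) x = G x.
Proof. by move=> hx; rewrite xi_PS /derive1n /=; exact: PS_derive2 Hc (in01 hx). Qed.

Let P0_expand psi : cont01 psi -> (forall x, 0 <= x <= 1 -> 0 < psi x) ->
  P0 beta psi = (\int[mu]_(x in `[0%R, 1%R]) (G x * psi x + (psi x)^-1))%:E.
Proof.
move=> cp pp.
have ci : cont01 (fun x => G x * psi x + (psi x)^-1).
  apply: cont01D; first exact: cont01M.
  by apply: cont01V => // x hx; rewrite gt_eqF // pp.
rewrite -I_R //; apply: eq_integral => x; rewrite inE /= in_itv /= => hx.
by rewrite /P_integrand gt_eqF ?pp // g_eq.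
Qed.


Let cont01B (f g : R -> R) : cont01 f -> cont01 g -> cont01 (fun x => f x - g x).
Proof. by move=> cf cg x hx; apply: continuousB; [exact: cf|exact: cg]. Qed.

Let key (h : R -> R) : cont01 h -> (forall x : R, 0 <= x <= 1 -> `|h x| <= 1) ->
  (forall e, 0 < e -> e <= c / 2 -> in_C (fun x => c + e * h x)) ->
  0 <= \int[mu]_(x in `[0%R, 1%R]) (G x * h x - h x / c ^+ 2).
Proof.
move=> ch hb hC.
have cA : cont01 (fun x => G x * h x - h x / c ^+ 2).
  by apply: cont01B; apply: cont01M => //; exact: cont01C.
have c20 : 0 < c / 2 by rewrite divr_gt0.
apply: (@small_nonneg _ _ (2 / c ^+ 3) (c / 2)) => // e e0 ec.
set psi := fun x => c + e * h x.
have cpsi : cont01 psi by apply: cont01D; [exact: cont01C| apply: cont01M => //; exact: cont01C].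
have hu : forall x : R, 0 <= x <= 1 -> `|e * h x| <= e.
  move=> x hx; rewrite normrM (gtr0_norm e0) -[leRHS]mulr1 ler_wpM2l //.
  + exact: ltW.
  + exact: hb.
have ppos : forall x : R, 0 <= x <= 1 -> 0 < psi x.
  move=> x hx; have := hu x hx; rewrite ler_norml => /andP[h1 h2].
  rewrite /psi; clear Hmin; lra.
have H1 := Hmin (hC e e0 ec).
rewrite (P0_expand cpsi ppos) (P0_expand (@cont01C _ c) (fun _ _ => c0)) lee_fin in H1.
have cB : cont01 (fun x => G x * c + c^-1).
  by apply: cont01D; [apply: cont01M => //|]; exact: cont01C.
have Hb : \int[mu]_(x in `[0%R, 1%R]) (G x * psi x + (psi x)^-1) <=
  \int[mu]_(x in `[0%R, 1%R]) ((G x * c + c^-1) +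
     (e * (G x * h x - h x / c ^+ 2) + 2 / c ^+ 3 * e ^+ 2)).
  apply: J_le.
  - apply: cont01D; first exact: cont01M.
    by apply: cont01V => // x hx; rewrite gt_eqF // ppos.
  - apply: cont01D => //; apply: cont01D; last exact: cont01C.
    by apply: cont01M => //; exact: cont01C.
  - move=> x hx; have Hi := inv_bound (u := e * h x) c0 (hu x hx) ec.
    have -> : G x * c + c^-1 + (e * (G x * h x - h x / c ^+ 2) + 2 / c ^+ 3 * e ^+ 2)
      = G x * psi x + (c^-1 - e * h x / c ^+ 2 + 2 * e ^+ 2 / c ^+ 3) by rewrite /psi; ring.
    by rewrite lerD2l.
have cEA : cont01 (fun x => e * (G x * h x - h x / c ^+ 2)).
  by apply: cont01M => //; exact: cont01C.
have E : \int[mu]_(x in `[0%R, 1%R]) ((G x * c + c^-1) +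
     (e * (G x * h x - h x / c ^+ 2) + 2 / c ^+ 3 * e ^+ 2)) =
  \int[mu]_(x in `[0%R, 1%R]) (G x * c + c^-1) +
    (e * \int[mu]_(x in `[0%R, 1%R]) (G x * h x - h x / c ^+ 2) + 2 / c ^+ 3 * e ^+ 2).
  rewrite (J_D (f := fun x => G x * c + c^-1)
     (g := fun x => e * (G x * h x - h x / c ^+ 2) + 2 / c ^+ 3 * e ^+ 2)) //;
     last by apply: cont01D => //; exact: cont01C.
  rewrite (J_D (f := fun x => e * (G x * h x - h x / c ^+ 2))
     (g := fun _ => 2 / c ^+ 3 * e ^+ 2)) //; last exact: cont01C.
  by rewrite (J_Z (f := fun x => G x * h x - h x / c ^+ 2)) // J_cst.
rewrite E in Hb.
have := le_trans H1 Hb.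
rewrite -subr_ge0 => Hf.
have -> : e * \int[mu]_(x in `[0%R, 1%R]) (G x * h x - h x / c ^+ 2) + 2 / c ^+ 3 * e ^+ 2 =
  \int[mu]_(x in `[0%R, 1%R]) (G x * c + c^-1) +
    (e * \int[mu]_(x in `[0%R, 1%R]) (G x * h x - h x / c ^+ 2) + 2 / c ^+ 3 * e ^+ 2) -
  \int[mu]_(x in `[0%R, 1%R]) (G x * c + c^-1) by ring.
exact: Hf.
Qed.


Let D1_0 : D1 0 = 0.
Proof. by rewrite PS0 /pseries_diffs /cf /= mulr0. Qed.

Let X_0 : X 0 = 0.
Proof. by rewrite PS0 /cf. Qed.

Let I1 : \int[mu]_(x in `[0%R, 1%R]) (G x * 1 - 1 / c ^+ 2) = D1 1 - 1 / c ^+ 2.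
Proof.
have cf1 : cont01 (fun x => G x * 1 - 1 / c ^+ 2).
  by apply: cont01B; [apply: cont01M => //|]; exact: cont01C.
have dF : forall x : R, 0 <= x <= 1 ->
    is_derive x 1 (fun y => D1 y - (c ^+ 2)^-1 * y) (G x * 1 - 1 / c ^+ 2).
  move=> x hx; have := is_deriveB (dD1 hx) (der_lin (c ^+ 2)^-1 x).
  by rewrite mulr1 div1r.
have H := @ftc01 _ (fun y => D1 y - (c ^+ 2)^-1 * y) (fun x => G x * 1 - 1 / c ^+ 2) dF cf1.
rewrite I_R // in H; case: H.
move=> ->; rewrite D1_0 !mulr1 mulr0 subr0 div1r; ring.
Qed.


Let I3 : \int[mu]_(x in `[0%R, 1%R]) (G x * - x - - x / c ^+ 2) =
  X 1 - D1 1 + (2 * c ^+ 2)^-1.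
Proof.
set k := (2 * c ^+ 2)^-1.
have cf1 : cont01 (fun x => G x * - x - - x / c ^+ 2).
  have cN : cont01 (fun x : R => - x).
    by move=> x _; apply: continuousN; exact: cvg_id.
  apply: cont01B; first by apply: cont01M.
  by apply: cont01M => //; exact: cont01C.
have dF : forall x : R, 0 <= x <= 1 ->
    is_derive x 1 (fun y => X y - y * D1 y + k * (y * y)) (G x * - x - - x / c ^+ 2).
  move=> x hx.
  have h1 := dX hx.
  have h2 := is_deriveM (is_derive_id x (1:R)) (dD1 hx).
  have h3 := is_deriveM (is_derive_id x (1:R)) (is_derive_id x (1:R)).
  have h4 := is_deriveZ k h3.
  have h5 := is_deriveD (is_deriveB h1 h2) h4.
  apply: is_derive_eq h5 _.
  rewrite /GRing.scale /= /k; field.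
  by rewrite gt_eqF.
have H := @ftc01 _ (fun y => X y - y * D1 y + k * (y * y)) _ dF cf1.
rewrite I_R // in H; case: H => ->.
by rewrite X_0 D1_0; ring.
Qed.


Lemma hard_SK : (exists p, (2 <= p)%N /\ beta p != 0) -> is_SK beta.
Proof.
apply: SK_of => p hp; apply: (beta_zero r1 Hc _ hp).
have A1 := @key (fun _ => 1) (@cont01C _ 1).
rewrite I1 in A1.
have {A1} A1 : 0 <= D1 1 - 1 / c ^+ 2.
  apply: A1 => [x _|e e0 ec]; first by rewrite normr1.
  apply: (@in_C_of _ _ (c + e) 0) => //= [x|x _]; first by rewrite mul0r addr0 mulr1.
  by rewrite mulr1 addr_ge0 // ltW.
have cN : cont01 (fun x : R => - x).
  by move=> x _; apply: continuousN; exact: cvg_id.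
have A3 := @key (fun x => - x) cN.
rewrite I3 in A3.
have {A3} A3 : 0 <= X 1 - D1 1 + (2 * c ^+ 2)^-1.
  apply: A3 => [x /andP[h0 h1]|e e0 ec]; first by rewrite normrN ger0_norm.
  apply: (@in_C_of _ _ c (- e)) => [x||x /andP[h0 h1]]; first by rewrite mulrN mulNr.
    by rewrite oppr_le0 ltW.
  rewrite mulrN subr_ge0.
  have ex : e * x <= e by rewrite -[leRHS]mulr1 ler_wpM2l // ltW.
  apply: (le_trans ex); apply: (le_trans ec); rewrite ler_pdivrMr // ler_peMr // ?ltW // ltr1n.
  by [].
have Ek : (2 * c ^+ 2)^-1 = (1 / c ^+ 2) / 2 by field; rewrite gt_eqF.
rewrite Ek in A3.
exact: fin_ineq A1 A3.
Qed.


Lemma P0_one_fin : exists v : R, P0 beta (fun _ => 1) = v%:E.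
Proof.
eexists; apply: P0_expand; first exact: cont01C.
by move=> *; exact: ltr01.
Qed.

End Hard.

Section Easy.
Variable R : realType.
Local Notation mu := (@lebesgue_measure R).

Lemma le_integral_nm (D : set R) (f1 f2 : R -> \bar R) :
  (forall x, D x -> (0 <= f1 x)%E) -> (forall x, D x -> (f1 x <= f2 x)%E) ->
  (\int[mu]_(x in D) f1 x <= \int[mu]_(x in D) f2 x)%E.
Proof.
move=> f0 f12.
have f20 : forall x, D x -> (0 <= f2 x)%E by move=> x Dx; exact: le_trans (f0 x Dx) (f12 x Dx).
rewrite !ge0_integralE //.
apply: le_ereal_sup => _ [h hf <-]; exists h => // x.
apply: le_trans (hf x) _.
by rewrite /patch; case: ifP => // /set_mem Dx; exact: f12.
Qed.


Lemma int_cst01 (v : \bar R) :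
  (\int[mu]_(x in `[0%R, 1%R]) (cst v) x = v)%E.
Proof. rewrite integral_cst // -[RHS]mule1; congr (_ * _)%E; exact: mu01. Qed.

Lemma easy_min (beta : nat -> R) (a : R) : 0 < a ->
  (forall t, xi beta t = a * t ^+ 2) ->
  is_minimizer beta (fun _ => Num.sqrt ((2 * a)^-1)).
Proof.
move=> a0 Hxi; set c := Num.sqrt ((2 * a)^-1).
have a20 : 0 < 2 * a by rewrite mulr_gt0.
have c0 : 0 < c by rewrite sqrtr_gt0 invr_gt0.
have cc : c ^+ 2 = (2 * a)^-1 by rewrite sqr_sqrtr // invr_ge0 ltW.
have xiE : xi beta = fun t => a * (t * t) by apply/funext => t; rewrite Hxi expr2.
have d1 : derive1 (xi beta) = fun t => (2 * a) * t.
  apply/funext => t; rewrite xiE derive1E.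
  have [_ E] := is_deriveZ a (is_deriveM (is_derive_id t (1:R)) (is_derive_id t (1:R))).
  apply: (etrans E); rewrite /GRing.scale /=; ring.
have g : forall x, derive1n 2 (xi beta) x = 2 * a.
  move=> x; rewrite /derive1n /= d1 derive1E.
  by have [_ E] := der_lin (2 * a) x.
split.
  apply: (@in_C_of _ _ c 0) => //= [x|x _]; first by rewrite mul0r addr0.
  exact: ltW.
move=> psi [_ [p0 _]].
set k := 2 * a * c + c^-1.
have k0 : 0 < k by rewrite addr_gt0 ?invr_gt0 // mulr_gt0.
have -> : P0 beta (fun _ => c) = (\int[mu]_(x in `[0%R, 1%R]) (cst k%:E) x)%E.
  apply: eq_integral => x _.
  by rewrite /P_integrand gt_eqF // g.
rewrite int_cst01.
have -> : (k%:E = \int[mu]_(x in `[0%R, 1%R]) (cst k%:E) x)%E.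
  by rewrite int_cst01.
apply: le_integral_nm => x; rewrite /= => hx.
  by rewrite lee_fin ltW.
rewrite /P_integrand; case: ifP => [_|/negbT pn]; first exact: leey.
have pp : 0 < psi x by rewrite lt_neqAle eq_sym pn p0 // inE.
by rewrite lee_fin g /k amgm_c.
Qed.

End Easy.

End Aux.
Import Aux.
Unset Implicit Arguments. Set Strict Implicit. Set Printing Implicit Defensive.

Theorem lemma1p19 (R : realType) (beta : nat -> R) (phi : R -> R) :
  is_model beta ->
  is_minimizer beta phi ->
  (forall psi : R -> R, is_minimizer beta psi ->
     forall x, x \in `[0, 1] -> psi x = phi x) ->
  ((exists c : R, forall x, x \in `[0, 1] -> phi x = c) <-> is_SK beta).
Proof.
move=> [Hnz [eps [e0 Hs]]] [Cphi Hmin] Huniq; split.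
- move=> [c Hc].
  have Cv := model_cvg e0 Hs.
  have r1 : 1 < 1 + eps by rewrite ltrDl.
  have Hall : allcvg (cf beta) (1 + eps).
    by have := allcvg_init Cv; rewrite ger0_norm // ltW // (lt_trans ltr01 r1).
  have P0phi : P0 beta phi = P0 beta (fun _ => c).
    apply: eq_integral => x hx; rewrite /P_integrand Hc //; move: hx; rewrite inE /=; exact.
  have cge0 : 0 <= c.
    have h0 : (0 : R) \in `[0, 1] by rewrite in_itv /= lexx ler01.
    by rewrite -(Hc 0 h0); exact: Cphi.2.1 0 h0.
  have C1 : in_C (fun _ : R => 1 : R).
    apply: (@in_C_of _ _ 1 0) => [x||x _]; first by rewrite mul0r addr0.
      by [].
    exact: ler01.
  case: (eqVneq c 0) => [c0|cn0].
    exfalso; subst c.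
    have [v Hv] := P0_one_fin r1 Hall.
    have := Hmin _ C1; rewrite Hv P0phi.
    have -> : P0 beta (fun _ => 0) = (\int[@lebesgue_measure R]_(x in `[0%R, 1%R]) (cst +oo) x)%E.
      by apply: eq_integral => x _; rewrite /P_integrand eqxx.
    by rewrite int_cst01 leye_eq.
  have c0 : 0 < c by rewrite lt_neqAle eq_sym cn0.
  apply: (hard_SK r1 Hall c0) => // psi Cpsi.
  by rewrite -P0phi; exact: Hmin.
- move=> [a [a0 Hxi]]; exists (Num.sqrt ((2 * a)^-1)) => x hx.
  by rewrite -(Huniq _ (easy_min a0 Hxi) x hx).
Qed.
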